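(* Let $a_2,a_5$ be real constants, not both zero, and $k_1,k_3$ real constants. On the region where $r=\sqrt{x^2+y^2}>0$ and $a_2y-a_5x\neq0$, let $$V=\frac{k_1}{(a_2y-a_5x)^2}+\frac{k_3(a_2x+a_5y)}{r(a_2y-a_5x)^2},$$ let $L=x\dot y-y\dot x$, and let $$K=(a_2\dot x+a_5\dot y)L^2+\frac{2k_1r^2}{(a_2y-a_5x)^2}(a_2\dot x+a_5\dot y)+\frac{k_3r}{a_2y-a_5x}(a_2\dot y-a_5\dot x)-\frac{k_3(a_2x+a_5y)}{r(a_2y-a_5x)}L+\frac{2k_3(a_2x+a_5y)r}{(a_2y-a_5x)^2}(a_2\dot x+a_5\dot y).$$ Then the time-dependent function $$J=-tK+(a_2x+a_5y)L^2+\frac{2k_1r^2(a_2x+a_5y)}{(a_2y-a_5x)^2}+\frac{2k_3r(a_2x+a_5y)^2}{(a_2y-a_5x)^2}+k_3r$$ is a first integral of $\ddot x=-V_{,x}$, $\ddot y=-V_{,y}$.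
   Context: A first integral is a function of $(t,x,y,\dot x,\dot y)$ whose total time derivative vanishes along every solution of the given equations of motion. *)

(* Defs.v *)
From Stdlib Require Import Reals.
From Coquelicot Require Import Coquelicot.
Open Scope R_scope.

Definition rad (x y : R) : R := sqrt (x ^ 2 + y ^ 2).

Definition Vpot (a2 a5 k1 k3 : R) (x y : R) : R :=
  k1 / (a2 * y - a5 * x) ^ 2
  + k3 * (a2 * x + a5 * y) / (rad x y * (a2 * y - a5 * x) ^ 2).

Definition Lmom (x y vx vy : R) : R := x * vy - y * vx.

Definition Kfun (a2 a5 k1 k3 : R) (x y vx vy : R) : R :=
  let r := rad x y in
  let D := a2 * y - a5 * x in
  let L := Lmom x y vx vy in
  (a2 * vx + a5 * vy) * L ^ 2
  + 2 * k1 * r ^ 2 / D ^ 2 * (a2 * vx + a5 * vy)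
  + k3 * r / D * (a2 * vy - a5 * vx)
  - k3 * (a2 * x + a5 * y) / (r * D) * L
  + 2 * k3 * (a2 * x + a5 * y) * r / D ^ 2 * (a2 * vx + a5 * vy).

Definition Jfun (a2 a5 k1 k3 : R) (t x y vx vy : R) : R :=
  let r := rad x y in
  let D := a2 * y - a5 * x in
  let L := Lmom x y vx vy in
  - t * Kfun a2 a5 k1 k3 x y vx vy
  + (a2 * x + a5 * y) * L ^ 2
  + 2 * k1 * r ^ 2 * (a2 * x + a5 * y) / D ^ 2
  + 2 * k3 * r * (a2 * x + a5 * y) ^ 2 / D ^ 2
  + k3 * r.

(* Main.v *)
Require Import Defs.
From Stdlib Require Import Reals Nsatz Lra.
From Coquelicot Require Import Coquelicot.
Open Scope R_scope.

Lemma rad_pos_sq x y : rad x y > 0 -> 0 < x ^ 2 + y ^ 2.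
Proof. unfold rad; intros H. destruct (Rle_lt_dec (x^2+y^2) 0) as [h|h]; auto.
  rewrite sqrt_neg_0 in H; lra. Qed.

Ltac nzs := repeat (apply Rmult_integral_contrapositive_currified); try (intro; lra).

Lemma dVx a2 a5 k1 k3 x y : rad x y > 0 -> a2 * y - a5 * x <> 0 ->
  Derive (fun u => Vpot a2 a5 k1 k3 u y) x =
  let r := rad x y in let D := a2 * y - a5 * x in let S := a2 * x + a5 * y in
  2 * k1 * a5 / D ^ 3 + k3 * (a2 / (r * D ^ 2) - S * x / (r ^ 3 * D ^ 2) + 2 * a5 * S / (r * D ^ 3)).
Proof.
  intros Hr HD. pose proof (rad_pos_sq _ _ Hr) as Hs.
  apply is_derive_unique. unfold Vpot, rad in *.
  replace (x * (x * 1) + y * (y * 1)) with (x^2+y^2) by ring.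
  auto_derive; replace (x * (x * 1) + y * (y * 1)) with (x^2+y^2) by ring.
  - repeat split; auto; nzs.
  - set (r := sqrt (x ^ 2 + y ^ 2)) in *. simpl. field. split; auto. lra.
Qed.

Lemma dVy a2 a5 k1 k3 x y : rad x y > 0 -> a2 * y - a5 * x <> 0 ->
  Derive (fun u => Vpot a2 a5 k1 k3 x u) y =
  let r := rad x y in let D := a2 * y - a5 * x in let S := a2 * x + a5 * y in
  - 2 * k1 * a2 / D ^ 3 + k3 * (a5 / (r * D ^ 2) - S * y / (r ^ 3 * D ^ 2) - 2 * a2 * S / (r * D ^ 3)).
Proof.
  intros Hr HD. pose proof (rad_pos_sq _ _ Hr) as Hs.
  apply is_derive_unique. unfold Vpot, rad in *.
  auto_derive; replace (x * (x * 1) + y * (y * 1)) with (x^2+y^2) by ring.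
  - repeat split; auto; nzs.
  - set (r := sqrt (x ^ 2 + y ^ 2)) in *. simpl. field. split; auto. lra.
Qed.
Theorem mainTheorem8 (a2 a5 k1 k3 : R) (Ha : a2 <> 0 \/ a5 <> 0)
  (t0 t1 : R) (x y vx vy : R -> R)
  (Hreg : forall t, t0 < t < t1 ->
     rad (x t) (y t) > 0 /\ a2 * y t - a5 * x t <> 0)
  (Hx : forall t, t0 < t < t1 -> is_derive x t (vx t))
  (Hy : forall t, t0 < t < t1 -> is_derive y t (vy t))
  (Hvx : forall t, t0 < t < t1 ->
     is_derive vx t (- Derive (fun u => Vpot a2 a5 k1 k3 u (y t)) (x t)))
  (Hvy : forall t, t0 < t < t1 ->
     is_derive vy t (- Derive (fun u => Vpot a2 a5 k1 k3 (x t) u) (y t))) :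
  forall t, t0 < t < t1 ->
    is_derive (fun s => Jfun a2 a5 k1 k3 s (x s) (y s) (vx s) (vy s)) t 0.
Proof.
  intros t Ht. destruct (Hreg t Ht) as [Hr HD].
  pose proof (rad_pos_sq _ _ Hr) as Hs.
  pose proof (Hx t Ht) as Dx. pose proof (Hy t Ht) as Dy.
  pose proof (Hvx t Ht) as Dvx. pose proof (Hvy t Ht) as Dvy.
  rewrite dVx in Dvx by auto. rewrite dVy in Dvy by auto.
  unfold Jfun, Kfun, Lmom, rad in *.
  auto_derive.
  - repeat split; first [eexists; exact Dx | eexists; exact Dy | eexists; exact Dvx | eexists; exact Dvy
      | replace (x t * (x t * 1) + y t * (y t * 1)) with (x t ^2+y t ^2) by ring; (lra || nzs) ].
  - replace (Derive (fun x0 : R => x x0) t) with (vx t) by (symmetry; apply is_derive_unique; exact Dx).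
    replace (Derive (fun x0 : R => y x0) t) with (vy t) by (symmetry; apply is_derive_unique; exact Dy).
    let tac H := (symmetry; apply is_derive_unique; exact H) in
    match goal with Dvx : is_derive vx t ?A, Dvy : is_derive vy t ?B |- _ =>
      replace (Derive (fun x0 : R => vx x0) t) with A by tac Dvx;
      replace (Derive (fun x0 : R => vy x0) t) with B by tac Dvy end.
    replace (x t * (x t * 1) + y t * (y t * 1)) with (x t ^2+y t ^2) by ring.
    set (X := x t) in *. set (Y := y t) in *. set (U := vx t) in *. set (W := vy t) in *.
    replace (X * (X * 1) + Y * (Y * 1)) with (X^2+Y^2) by ring.
    set (r := sqrt (X ^ 2 + Y ^ 2)) in *.
    assert (Hr2 : r * r = X ^ 2 + Y ^ 2) by (apply sqrt_sqrt; lra).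
    clearbody r X Y U W. clear Dx Dy Dvx Dvy Hreg Hx Hy Hvx Hvy.
    assert (HD' : a2 * Y + - (a5 * X) <> 0) by (intro; apply HD; lra).
    assert (Hr0 : r <> 0) by lra.
    field_simplify; [| tauto].
    unfold Rdiv; apply Rmult_eq_0_compat_r.
    assert (P16 : r ^ 16 = (X^2+Y^2)^8) by (replace (r ^ 16) with ((r*r)^8) by ring; rewrite Hr2; ring). try rewrite P16.
    assert (P15 : r ^ 15 = r * (X^2+Y^2)^7) by (replace (r ^ 15) with ((r*r)^7 * r) by ring; rewrite Hr2; ring). try rewrite P15.
    assert (P14 : r ^ 14 = (X^2+Y^2)^7) by (replace (r ^ 14) with ((r*r)^7) by ring; rewrite Hr2; ring). try rewrite P14.
    assert (P13 : r ^ 13 = r * (X^2+Y^2)^6) by (replace (r ^ 13) with ((r*r)^6 * r) by ring; rewrite Hr2; ring). try rewrite P13.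
    assert (P12 : r ^ 12 = (X^2+Y^2)^6) by (replace (r ^ 12) with ((r*r)^6) by ring; rewrite Hr2; ring). try rewrite P12.
    assert (P11 : r ^ 11 = r * (X^2+Y^2)^5) by (replace (r ^ 11) with ((r*r)^5 * r) by ring; rewrite Hr2; ring). try rewrite P11.
    assert (P10 : r ^ 10 = (X^2+Y^2)^5) by (replace (r ^ 10) with ((r*r)^5) by ring; rewrite Hr2; ring). try rewrite P10.
    assert (P9 : r ^ 9 = r * (X^2+Y^2)^4) by (replace (r ^ 9) with ((r*r)^4 * r) by ring; rewrite Hr2; ring). try rewrite P9.
    assert (P8 : r ^ 8 = (X^2+Y^2)^4) by (replace (r ^ 8) with ((r*r)^4) by ring; rewrite Hr2; ring). try rewrite P8.
    assert (P7 : r ^ 7 = r * (X^2+Y^2)^3) by (replace (r ^ 7) with ((r*r)^3 * r) by ring; rewrite Hr2; ring). try rewrite P7.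
    assert (P6 : r ^ 6 = (X^2+Y^2)^3) by (replace (r ^ 6) with ((r*r)^3) by ring; rewrite Hr2; ring). try rewrite P6.
    assert (P5 : r ^ 5 = r * (X^2+Y^2)^2) by (replace (r ^ 5) with ((r*r)^2 * r) by ring; rewrite Hr2; ring). try rewrite P5.
    assert (P4 : r ^ 4 = (X^2+Y^2)^2) by (replace (r ^ 4) with ((r*r)^2) by ring; rewrite Hr2; ring). try rewrite P4.
    assert (P3 : r ^ 3 = r * (X^2+Y^2)^1) by (replace (r ^ 3) with ((r*r)^1 * r) by ring; rewrite Hr2; ring). try rewrite P3.
    assert (P2 : r ^ 2 = (X^2+Y^2)^1) by (replace (r ^ 2) with ((r*r)^1) by ring; rewrite Hr2; ring). try rewrite P2.
    Time ring.
Qed.
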